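(* Let $d\ge3$, $n_1,\dots,n_d,k$ positive integers, $\mathfrak{L}$ an invertible linear transform as in the context, $\tau>0$, $0<p<1$ and $w=(w_{i,j})$ nonnegative weights. Let $\boldsymbol{\mathcal{A}}=\boldsymbol{\mathcal{Q}}*_{\mathfrak{L}}\boldsymbol{\mathcal{B}}\in\mathbb{R}^{n_1\times n_2\times n_3\times\cdots\times n_d}$, where $\boldsymbol{\mathcal{Q}}\in\mathbb{R}^{n_1\times k\times n_3\times\cdots\times n_d}$ is partially orthogonal and $\boldsymbol{\mathcal{B}}\in\mathbb{R}^{k\times n_2\times n_3\times\cdots\times n_d}$. Then $$\boldsymbol{\mathcal{D}}_{\boldsymbol{\mathcal{W}},p,\tau}(\boldsymbol{\mathcal{A}})=\boldsymbol{\mathcal{Q}}*_{\mathfrak{L}}\boldsymbol{\mathcal{D}}_{\boldsymbol{\mathcal{W}},p,\tau}(\boldsymbol{\mathcal{B}}).$$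
   Context: Transform: for $i=3,\dots,d$ let $\bm U_{n_i}\in\mathbb{C}^{n_i\times n_i}$ satisfy $\bm U_{n_i}\bm U_{n_i}^H=\bm U_{n_i}^H\bm U_{n_i}=\alpha_i\bm I_{n_i}$, $\alpha_i>0$. For a tensor $\boldsymbol{\mathcal{A}}$ of size $m_1\times m_2\times n_3\times\cdots\times n_d$, $\mathfrak{L}(\boldsymbol{\mathcal{A}})=\boldsymbol{\mathcal{A}}\times_3\bm U_{n_3}\cdots\times_d\bm U_{n_d}$ (mode-$k$ product $\boldsymbol{\mathcal{B}}=\boldsymbol{\mathcal{A}}\times_k\bm M$ iff $\bm B_{(k)}=\bm M\bm A_{(k)}$), with inverse $\mathfrak{L}^{-1}$. Frontal slices $\boldsymbol{\mathcal{A}}^{<j>}=\boldsymbol{\mathcal{A}}(:,:,i_3,\dots,i_d)$, $j=i_3+\sum_{a=4}^d(i_a-1)\prod_{b=3}^{a-1}n_b\in\{1,\dots,N\}$, $N=n_3\cdots n_d$. t-product: $\boldsymbol{\mathcal{C}}=\boldsymbol{\mathcal{A}}*_{\mathfrak{L}}\boldsymbol{\mathcal{B}}$ iff $\mathfrak{L}(\boldsymbol{\mathcal{C}})^{<j>}=\mathfrak{L}(\boldsymbol{\mathcal{A}})^{<j>}\mathfrak{L}(\boldsymbol{\mathcal{B}})^{<j>}$ for all $j$. Transpose: $\mathfrak{L}(\boldsymbol{\mathcal{A}}^T)^{<j>}=(\mathfrak{L}(\boldsymbol{\mathcal{A}})^{<j>})^H$. Identity tensor: $\mathfrak{L}(\boldsymbol{\mathcal{I}})^{<j>}=\bm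 I$ for all $j$. $\boldsymbol{\mathcal{Q}}$ is partially orthogonal if $\boldsymbol{\mathcal{Q}}^T*_{\mathfrak{L}}\boldsymbol{\mathcal{Q}}=\boldsymbol{\mathcal{I}}$, orthogonal if also $\boldsymbol{\mathcal{Q}}*_{\mathfrak{L}}\boldsymbol{\mathcal{Q}}^T=\boldsymbol{\mathcal{I}}$. f-diagonal: all frontal slices diagonal. T-SVD: $\boldsymbol{\mathcal{A}}=\boldsymbol{\mathcal{U}}*_{\mathfrak{L}}\boldsymbol{\mathcal{S}}*_{\mathfrak{L}}\boldsymbol{\mathcal{V}}^T$, $\boldsymbol{\mathcal{U}},\boldsymbol{\mathcal{V}}$ orthogonal, $\boldsymbol{\mathcal{S}}$ f-diagonal, obtained from slice-wise SVDs of $\mathfrak{L}(\boldsymbol{\mathcal{A}})^{<j>}$ with singular values in non-increasing order. GST: for $s\in\mathbb{R}$, $w\ge0$, $0<p<1$, $\delta=[2w(1-p)]^{\frac1{2-p}}+wp[2w(1-p)]^{\frac{p-1}{2-p}}$; $\mathrm{GST}(s,w,p)=0$ if $|s|\le\delta$, else $\mathrm{sign}(s)\hat\alpha^*$ with $\hat\alpha^*$ the largest positive root of $\alpha+wp\alpha^{p-1}=|s|$; $\mathrm{GST}(s,0,p)=s$. GTSVT: for a tensor $\boldsymbol{\mathcal{A}}$ of size $m_1\times m_2\times n_3\times\cdots\times n_d$ with T-SVD $\boldsymbol{\mathcal{U}}*_{\mathfrak{L}}\boldsymbol{\mathcal{S}}*_{\mathfrak{L}}\boldsymbol{\mathcal{V}}^T$,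 $\boldsymbol{\mathcal{D}}_{\boldsymbol{\mathcal{W}},p,\tau}(\boldsymbol{\mathcal{A}})=\boldsymbol{\mathcal{U}}*_{\mathfrak{L}}\mathfrak{L}^{-1}(\hat{\boldsymbol{\mathcal{S}}})*_{\mathfrak{L}}\boldsymbol{\mathcal{V}}^T$, where $\hat{\boldsymbol{\mathcal{S}}}$ is f-diagonal with $\hat{\boldsymbol{\mathcal{S}}}^{<j>}(i,i)=\mathrm{GST}\big(\mathfrak{L}(\boldsymbol{\mathcal{S}})^{<j>}(i,i),\tau w_{i,j},p\big)$ for $i\le\min(m_1,m_2)$; here $\boldsymbol{\mathcal{W}}$ denotes the f-diagonal weight tensor with $\boldsymbol{\mathcal{W}}^{<j>}(i,i)=w_{i,j}$, the same weights $w_{i,j}$ being used regardless of the first two dimensions of the argument. *)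

(* Defs.v *)
From HB Require Import structures.
From mathcomp Require Import all_boot all_order all_algebra.
From mathcomp Require Import complex.
From mathcomp Require Import boolp classical_sets reals exp.

Set Implicit Arguments.
Unset Strict Implicit.
Unset Printing Implicit Defensive.

Import Order.TTheory GRing.Theory Num.Theory.
Local Open Scope ring_scope.
Local Open Scope complex_scope.

Section GST.
Variable R : realType.

Definition gst_delta (w p : R) : R :=
  powR (2 * w * (1 - p)) (1 / (2 - p))
  + w * p * powR (2 * w * (1 - p)) ((p - 1) / (2 - p)).

Definition gst_root (t w p : R) : R :=
  xget 0 [set a : R | 0 < a /\ a + w * p * powR a (p - 1) = t /\
          (forall b : R, 0 < b -> b + w * p * powR b (p - 1) = t -> b <= a)].

Definition GST (s w p : R) : R :=
  if w == 0 then s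
  else if `|s| <= gst_delta w p then 0
  else Num.sg s * gst_root `|s| w p.
End GST.

(* A tensor of size m1 x m2 x n_3 x ... x n_d (ns = [:: n_3; ...; n_d]) *)
(* is represented by its family of frontal slices A^{<j>}, the         *)
(* (0-based) linear index j = (i_3-1) + sum_a (i_a-1) prod_{b<a} n_b  *)
(* ranging over 'I_N, N = n_3 * ... * n_d.                            *)
Section Tensor.
Variable R : realType.
Local Notation C := R[i].

Definition mxH m n (M : 'M[C]_(m, n)) : 'M[C]_(n, m) := (map_mx Num.conj M)^T.

(* entry (r, c) of a matrix, indexed by natural numbers (0 outside) *)
Definition mxe m n (M : 'M[C]_(m, n)) (r c : nat) : C :=
  match @insub nat (fun x => (x < m)%N) 'I_m r, @insub nat (fun x => (x < n)%N) 'I_n c with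
  | Some r', Some c' => M r' c'
  | _, _ => 0
  end.

Variable ns : seq nat.   (* [:: n_3; ...; n_d] *)

Definition dimN : nat := \prod_(a < size ns) nth 1 ns a.

Definition tensor (m1 m2 : nat) := 'I_dimN -> 'M[C]_(m1, m2).

Definition stride (a : nat) : nat := \prod_(b < a) nth 1 ns b.

(* (0-based) index i_{a+3} - 1 of the frontal slice with linear index j *)
Definition digit (j : nat) (a : nat) : nat := (j %/ stride a) %% nth 1 ns a.

Definition modeprod m1 m2 (a : 'I_(size ns)) (M : 'M[C]_(nth 1 ns a))
  (T : tensor m1 m2) : tensor m1 m2 :=
  fun j => \sum_(j' : 'I_dimN |
                [forall b : 'I_(size ns), (b != a) ==> (digit j' b == digit j b)])
             mxe M (digit j a) (digit j' a) *: T j'.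

Variable Us : forall a : 'I_(size ns), 'M[C]_(nth 1 ns a).

Definition Lt m1 m2 (T : tensor m1 m2) : tensor m1 m2 :=
  foldl (fun X a => modeprod (Us a) X) T (enum 'I_(size ns)).

Definition Linv m1 m2 (T : tensor m1 m2) : tensor m1 m2 :=
  foldl (fun X a => modeprod (invmx (Us a)) X) T (rev (enum 'I_(size ns))).

Definition tprod m1 m2 m3 (A : tensor m1 m2) (B : tensor m2 m3) : tensor m1 m3 :=
  Linv (fun j => Lt A j *m Lt B j).

Definition ttr m1 m2 (A : tensor m1 m2) : tensor m2 m1 :=
  Linv (fun j => mxH (Lt A j)).

Definition tid m : tensor m m := Linv (fun _ => 1%:M).

Definition part_orth m1 m2 (Q : tensor m1 m2) : Prop :=
  tprod (ttr Q) Q = tid m2.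

Definition orth m (Q : tensor m m) : Prop :=
  part_orth Q /\ tprod Q (ttr Q) = tid m.

Definition fdiag m1 m2 (S : tensor m1 m2) : Prop :=
  forall j (r : 'I_m1) (c : 'I_m2), (r : nat) != c -> S j r c = 0.

Definition real_tensor m1 m2 (A : tensor m1 m2) : Prop :=
  forall j r c, complex.Im (A j r c) = 0.

Definition tsvd m1 m2 (A : tensor m1 m2) (U : tensor m1 m1) (S : tensor m1 m2)
  (V : tensor m2 m2) : Prop :=
  orth U /\ orth V /\ fdiag S /\ fdiag (Lt S) /\
  A = tprod (tprod U S) (ttr V) /\
  (forall j i, (i < minn m1 m2)%N -> 0 <= mxe (Lt S j) i i) /\
  (forall j i i', (i <= i')%N -> (i' < minn m1 m2)%N ->
                   mxe (Lt S j) i' i' <= mxe (Lt S j) i i).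

(* weights w_{i,j} (0-based i), independent of the first two dimensions *)
Definition Shat m1 m2 (W : nat -> 'I_dimN -> R) (p tau : R) (S : tensor m1 m2)
  : tensor m1 m2 :=
  fun j => \matrix_(r < m1, c < m2)
     if (r : nat) == c then (GST (complex.Re (Lt S j r c)) (tau * W r j) p)%:C else 0.

(* X is (a value of) D_{W,p,tau}(A), for some T-SVD of A *)
Definition gtsvt m1 m2 (W : nat -> 'I_dimN -> R) (p tau : R) (A X : tensor m1 m2)
  : Prop :=
  exists U S V, tsvd A U S V /\
    X = tprod (tprod U (Linv (Shat W p tau S))) (ttr V).

End Tensor.

(* Main.v *)
Require Import Defs.
From HB Require Import structures.
From mathcomp Require Import all_boot all_order all_algebra.
From mathcomp Require Import complex.
From mathcomp Require Import boolp classical_sets reals exp.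
From mathcomp Require Import zify.
Set Implicit Arguments.
Unset Strict Implicit.
Unset Printing Implicit Defensive.
Import Order.TTheory GRing.Theory Num.Theory Num.Def.

Section Digits.
Variable ns : seq nat.
Hypothesis nspos : all (fun n => 0 < n)%N ns.

Lemma nn_gt0 b : (0 < nth 1 ns b)%N.
Proof.
case: (ltnP b (size ns)) => h; first by apply: (allP nspos); exact: mem_nth.
by rewrite nth_default.
Qed.

Lemma strideS a : stride ns a.+1 = (stride ns a * nth 1 ns a)%N.
Proof. by rewrite /stride big_ord_recr. Qed.

Lemma stride0 : stride ns 0 = 1%N.
Proof. by rewrite /stride big_ord0. Qed.

Lemma stride_gt0 a : (0 < stride ns a)%N.
Proof. elim: a => [|a IH]; first by rewrite stride0. by rewrite strideS muln_gt0 IH nn_gt0. Qed.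

Lemma stride_dvd a b : (a <= b)%N -> (stride ns a %| stride ns b)%N.
Proof.
elim: b => [|b IH]; first by rewrite leqn0 => /eqP ->.
rewrite leq_eqVlt => /orP [/eqP -> //|]; rewrite ltnS => /IH h.
by rewrite strideS dvdn_mulr.
Qed.

Lemma digitE j a : digit ns j a = (j %% stride ns a.+1 %/ stride ns a)%N.
Proof. by rewrite /digit modn_divl strideS mulnC. Qed.

Lemma digit_lt j a : (digit ns j a < nth 1 ns a)%N.
Proof. by rewrite /digit ltn_pmod ?nn_gt0. Qed.

Lemma mod_strideS x a :
  (x %% stride ns a.+1 = digit ns x a * stride ns a + x %% stride ns a)%N.
Proof.
rewrite digitE {1}(divn_eq (x %% stride ns a.+1) (stride ns a)).
by rewrite (@modn_dvdm (stride ns a.+1) x (stride ns a)) // stride_dvd.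
Qed.

Lemma digit_uniq x y : (x < dimN ns)%N -> (y < dimN ns)%N ->
  (forall b : 'I_(size ns), digit ns x b = digit ns y b) -> x = y.
Proof.
move=> hx hy hd.
have H : forall m, (m <= size ns)%N -> (x %% stride ns m = y %% stride ns m)%N.
  elim=> [|m IH] hm; first by rewrite stride0 !modn1.
  rewrite !mod_strideS IH ?(ltnW hm) //.
  by have := hd (Ordinal hm) => /= ->.
by have := H _ (leqnn _); rewrite !modn_small.
Qed.

Section Rep.
Variable a : nat.
Definition rep (j t : nat) : nat :=
  (j %/ stride ns a.+1 * stride ns a.+1 + t * stride ns a + j %% stride ns a)%N.

Lemma rep_alt j t : rep j t =
  ((j %/ stride ns a.+1 * nth 1 ns a + t) * stride ns a + j %% stride ns a)%N.
Proof. rewrite /rep strideS; nia. Qed.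

Lemma rep_digit_a j t : (t < nth 1 ns a)%N -> digit ns (rep j t) a = t.
Proof.
move=> ht; rewrite /digit rep_alt divnMDl ?stride_gt0 //.
rewrite (divn_small (ltn_pmod _ (stride_gt0 a))) addn0.
by rewrite modnMDl modn_small.
Qed.

Lemma rep_low j t : (t < nth 1 ns a)%N ->
  (t * stride ns a + j %% stride ns a < stride ns a.+1)%N.
Proof.
move=> ht; have := ltn_pmod j (stride_gt0 a); rewrite strideS.
set s := stride ns a; set r := (j %% s)%N; set n := nth 1 ns a => hr.
have : (t.+1 * s <= n * s)%N by rewrite leq_mul2r ht orbT.
nia.
Qed.

Lemma rep_digit_b j t b : (t < nth 1 ns a)%N -> b != a ->
  digit ns (rep j t) b = digit ns j b.
Proof.
move=> ht; rewrite neq_ltn => /orP [hb|hb].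
  rewrite !digitE; congr (_ %/ _)%N.
  rewrite -(@modn_dvdm (stride ns a) j _ (stride_dvd hb)).
  rewrite -(@modn_dvdm (stride ns a) (rep j t) _ (stride_dvd hb)).
  by rewrite rep_alt modnMDl modn_mod.
have hd := stride_dvd hb.
rewrite /digit -(divnK hd) mulnC !divnMA; congr ((_ %/ _) %% _)%N.
by rewrite /rep -addnA divnMDl ?stride_gt0 // (divn_small (rep_low j ht)) addn0.
Qed.

Lemma rep_lt j t : (a < size ns)%N -> (j < dimN ns)%N -> (t < nth 1 ns a)%N ->
  (rep j t < dimN ns)%N.
Proof.
move=> ha hj ht.
have hd : (stride ns a.+1 %| dimN ns)%N by apply: stride_dvd.
have hq : (j %/ stride ns a.+1 < dimN ns %/ stride ns a.+1)%N.
  by rewrite ltn_divLR ?stride_gt0 // divnK.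
have hl := rep_low j ht.
rewrite /rep -addnA -(divnK hd).
set q := (j %/ _)%N; set Q := (dimN ns %/ _)%N; set s := stride ns a.+1.
have : (q.+1 * s <= Q * s)%N by rewrite leq_mul2r hq orbT.
nia.
Qed.
End Rep.
End Digits.
Local Open Scope ring_scope.
Section Mode.
Variable R : realType.
Local Notation C := R[i].
Variable ns : seq nat.
Hypothesis nspos : all (fun n => 0 < n)%N ns.

Lemma mxeE m n (M : 'M[C]_(m, n)) (r : 'I_m) (c : 'I_n) : mxe M r c = M r c.
Proof.
rewrite /mxe; case: insubP => [r' _ /val_inj ->|]; last by rewrite ltn_ord.
by case: insubP => [c' _ /val_inj ->|] //; rewrite ltn_ord.
Qed.

Lemma mxe_out m n (M : 'M[C]_(m, n)) (r c : nat) :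
  ((m <= r) || (n <= c))%N -> mxe M r c = 0.
Proof.
rewrite /mxe; case: insubP => [r' hr _|//]; case: insubP => [c' hc _|//].
by rewrite leqNgt hr leqNgt hc.
Qed.

Variable a : 'I_(size ns).

Definition digo (j : 'I_(dimN ns)) : 'I_(nth 1 ns a) := Ordinal (digit_lt nspos j a).
Definition repo (j : 'I_(dimN ns)) (t : 'I_(nth 1 ns a)) : 'I_(dimN ns) :=
  Ordinal (rep_lt nspos (ltn_ord a) (ltn_ord j) (ltn_ord t)).

Lemma digit_repo j t : digit ns (repo j t) a = t.
Proof. exact: rep_digit_a. Qed.

Lemma digit_repo_b j t (b : 'I_(size ns)) : b != a -> digit ns (repo j t) b = digit ns j b.
Proof. by move=> hb; apply: rep_digit_b => //. Qed.

Lemma repo_repo j t t' : repo (repo j t) t' = repo j t'.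
Proof.
apply: val_inj; apply: digit_uniq; try exact: ltn_ord; move=> b.
case: (eqVneq b a) => [->|hb]; first by rewrite !digit_repo.
by rewrite !digit_repo_b.
Qed.

Lemma repo_id j : repo j (digo j) = j.
Proof.
apply: val_inj; apply: digit_uniq; try exact: ltn_ord; move=> b.
case: (eqVneq b a) => [->|hb]; first by rewrite digit_repo.
by rewrite digit_repo_b.
Qed.

Lemma sum_mode (V : zmodType) (F : 'I_(dimN ns) -> V) (j : 'I_(dimN ns)) :
  \sum_(j' : 'I_(dimN ns) | [forall b : 'I_(size ns), (b != a) ==> (digit ns j' b == digit ns j b)]) F j'
  = \sum_(t < nth 1 ns a) F (repo j t).
Proof.
rewrite (partition_big digo xpredT) //=; apply: eq_bigr => t _.
rewrite (big_pred1 (repo j t)) // => j'; apply/idP/idP.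
  move=> /andP [/forallP h /eqP ht]; apply/eqP/val_inj/digit_uniq; try exact: ltn_ord; move=> b.
  case: (eqVneq b a) => [->|hb]; first by rewrite digit_repo -ht.
  by rewrite digit_repo_b //; move: (h b); rewrite hb => /eqP.
move=> /eqP ->; apply/andP; split.
  by apply/forallP => b; apply/implyP => hb; rewrite digit_repo_b.
by apply/eqP/val_inj; rewrite /= digit_repo.
Qed.

Lemma modeprodE m1 m2 (M : 'M[C]_(nth 1 ns a)) (T : tensor R ns m1 m2) j :
  modeprod M T j = \sum_(t < nth 1 ns a) M (digo j) t *: T (repo j t).
Proof.
rewrite /modeprod sum_mode; apply: eq_bigr => t _.
by rewrite digit_repo -[digit ns j a]/(nat_of_ord (digo j)) mxeE.
Qed.

Lemma digo_repo j t : digo (repo j t) = t.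
Proof. by apply: val_inj; rewrite /= digit_repo. Qed.

Lemma modeprodM m1 m2 (M N : 'M[C]_(nth 1 ns a)) (T : tensor R ns m1 m2) :
  modeprod M (modeprod N T) = modeprod (M *m N) T.
Proof.
apply: funext => j; rewrite !modeprodE.
under eq_bigr => t _ do rewrite modeprodE digo_repo scaler_sumr.
rewrite exchange_big /=; apply: eq_bigr => t' _.
rewrite mxE scaler_suml; apply: eq_bigr => t _.
by rewrite repo_repo scalerA.
Qed.

Lemma modeprod1 m1 m2 (T : tensor R ns m1 m2) : modeprod (1%:M : 'M[C]_(nth 1 ns a)) T = T.
Proof.
apply: funext => j; rewrite modeprodE (bigD1 (digo j)) //= big1 ?addr0.
  by rewrite mxE eqxx scale1r repo_id.
by move=> t /negPf ht; rewrite mxE eq_sym ht scale0r.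
Qed.

Lemma modeprod_entry m1 m2 (M : 'M[C]_(nth 1 ns a)) (T : tensor R ns m1 m2) j r c :
  modeprod M T j r c = \sum_(t < nth 1 ns a) M (digo j) t * T (repo j t) r c.
Proof.
rewrite modeprodE summxE; apply: eq_bigr => t _; by rewrite mxE.
Qed.
End Mode.

Section Transform.
Variable R : realType.
Local Notation C := R[i].
Variable ns : seq nat.
Hypothesis nspos : all (fun n => 0 < n)%N ns.
Variable Us : forall a : 'I_(size ns), 'M[C]_(nth 1 ns a).
Hypothesis Uunit : forall a, Us a \in unitmx.

Lemma foldl_inv (X I : Type) (f g : I -> X -> X) (s : seq I) (x : X) :
  (forall a x, g a (f a x) = x) ->
  foldr (fun a y => g a y) (foldl (fun y a => f a y) x s) s = x.
Proof.
move=> h; elim: s x => [//|a s IH] x /=.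
by rewrite IH h.
Qed.

Lemma foldr_inv (X I : Type) (f g : I -> X -> X) (s : seq I) (x : X) :
  (forall a x, f a (g a x) = x) ->
  foldl (fun y a => f a y) (foldr (fun a y => g a y) x s) s = x.
Proof.
move=> h; elim: s x => [//|a s IH] x /=.
by rewrite h IH.
Qed.

Lemma Linv_Lt m1 m2 (T : tensor R ns m1 m2) : Linv Us (Lt Us T) = T.
Proof.
rewrite /Linv /Lt foldl_rev; apply: foldl_inv => b x.
by rewrite (modeprodM nspos) mulVmx ?Uunit // modeprod1.
Qed.

Lemma Lt_Linv m1 m2 (T : tensor R ns m1 m2) : Lt Us (Linv Us T) = T.
Proof.
rewrite /Linv /Lt foldl_rev; apply: foldr_inv => b x.
by rewrite (modeprodM nspos) mulmxV ?Uunit // modeprod1.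
Qed.

Lemma Linv_inj m1 m2 (T T' : tensor R ns m1 m2) : Linv Us T = Linv Us T' -> T = T'.
Proof. by move=> h; rewrite -(Lt_Linv T) h Lt_Linv. Qed.

Lemma Linv_fdiag m1 m2 (T : tensor R ns m1 m2) : fdiag T -> fdiag (Linv Us T).
Proof.
rewrite /Linv; elim: (rev _) T => [//|b s IH] T h /=; apply: IH.
move=> j r c hrc; rewrite (modeprod_entry nspos) big1 // => t _.
by rewrite h // mulr0.
Qed.

Lemma Lt_tprod m1 m2 m3 (A : tensor R ns m1 m2) (B : tensor R ns m2 m3) j :
  Lt Us (tprod Us A B) j = Lt Us A j *m Lt Us B j.
Proof. by rewrite /tprod Lt_Linv. Qed.

Lemma Lt_ttr m1 m2 (A : tensor R ns m1 m2) j : Lt Us (ttr Us A) j = mxH (Lt Us A j).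
Proof. by rewrite /ttr Lt_Linv. Qed.

Lemma Lt_tid m j : Lt Us (tid Us m) j = 1%:M.
Proof. by rewrite /tid Lt_Linv. Qed.

Lemma tensor_eq m1 m2 (A B : tensor R ns m1 m2) : (forall j, Lt Us A j = Lt Us B j) -> A = B.
Proof. by move=> h; rewrite -(Linv_Lt A) -(Linv_Lt B); congr Linv; apply: funext. Qed.
End Transform.
Section Complete.
Variable R : realType.
Local Notation C := R[i].
Local Open Scope sesquilinear_scope.
Local Notation "B ^!" :=
  (orthomx conjC (mx_of_hermitian (hermitian1mx _)) B) : matrix_set_scope.

Lemma mxH_tc m n (M : 'M[C]_(m, n)) : mxH M = M ^t conjC.
Proof. by rewrite /mxH map_trmx. Qed.

Lemma mxHE m n (M : 'M[C]_(m, n)) i j : mxH M i j = (M j i)^*.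
Proof. by rewrite /mxH !mxE. Qed.

Lemma mxHK m n (M : 'M[C]_(m, n)) : mxH (mxH M) = M.
Proof. by apply/matrixP => i j; rewrite !mxHE conjCK. Qed.

Lemma mxHM m n p (A : 'M[C]_(m, n)) (B : 'M[C]_(n, p)) :
  mxH (A *m B) = mxH B *m mxH A.
Proof. by rewrite !mxH_tc trmx_mul map_mxM. Qed.

Lemma castmx_unitary m m' n (e : m = m') (A : 'M[C]_(m, n)) :
  A \is unitarymx -> castmx (e, erefl n) A \is unitarymx.
Proof. by case: m' / e; rewrite castmx_id. Qed.

Lemma unitary_le r n (M : 'M[C]_(r, n)) : M *m mxH M = 1%:M -> (r <= n)%N.
Proof.
rewrite mxH_tc => /unitarymxP /mxrank_unitary <-; exact: rank_leq_col.
Qed.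

Lemma complete_rows r n (M : 'M[C]_(r, n)) : M *m mxH M = 1%:M ->
  exists E : 'M[C]_n, E *m mxH E = 1%:M /\
    forall (i l : 'I_n), (i < r)%N -> E i l = mxe M i l.
Proof.
rewrite mxH_tc => hM.
have hr : \rank M = r by apply: mxrank_unitary; apply/unitarymxP.
set S := schmidt (row_base (M^!)%MS).
have hS : S \is unitarymx by apply: schmidt_unitarymx; exact: rank_leq_col.
have hSo : (S <= M^!)%MS.
  by rewrite /S (eqmx_schmidt_free (row_base_free _)) eq_row_base.
have hMS : M *m S ^t conjC = 0.
  by apply/orthomx1P; rewrite orthomx_sym.
have hSM : S *m M ^t conjC = 0.
  move: (congr1 (@mxH R _ _) hMS); rewrite -!mxH_tc mxHM mxHK => h.
  by rewrite h; apply/matrixP => i j; rewrite mxHE !mxE conjC0.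
have hu : col_mx M S \is unitarymx.
  apply/unitarymxP; rewrite tr_col_mx map_row_mx mul_col_row hM hMS hSM.
  by rewrite (unitarymxP hS) -scalar_mx_block.
have e : (r + \rank (M^!)%MS)%N = n by rewrite -{1}hr add_rank_ortho.
exists (castmx (e, erefl n) (col_mx M S)); split.
  by rewrite mxH_tc; apply/unitarymxP/castmx_unitary.
move=> i l hi; rewrite castmxE /=.
have -> : cast_ord (esym e) i = lshift _ (Ordinal hi) by apply: val_inj.
rewrite col_mxEu; rewrite -[nat_of_ord i]/(nat_of_ord (Ordinal hi)) mxeE.
by congr (M _ _); apply: val_inj.
Qed.
End Complete.
Section Slice.
Variable R : realType.
Local Notation C := R[i].
Variable hh : nat -> C -> C.
Hypothesis hh0 : forall c, hh c 0 = 0.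

Definition isdiag m1 m2 (S : 'M[C]_(m1, m2)) :=
  forall (r : 'I_m1) (c : 'I_m2), (r : nat) != c -> S r c = 0.

Definition shg m1 m2 (S : 'M[C]_(m1, m2)) : 'M[C]_(m1, m2) :=
  \matrix_(r < m1, c < m2) if (r : nat) == c then hh r (S r c) else 0.

Definition svdj m1 m2 (A : 'M[C]_(m1, m2)) (U : 'M[C]_m1) (S : 'M[C]_(m1, m2))
  (V : 'M[C]_m2) : Prop :=
  [/\ mxH U *m U = 1%:M /\ U *m mxH U = 1%:M,
      mxH V *m V = 1%:M /\ V *m mxH V = 1%:M,
      isdiag S, A = U *m S *m mxH V &
      (forall i, (i < minn m1 m2)%N -> 0 <= mxe S i i) /\
      (forall i i', (i <= i')%N -> (i' < minn m1 m2)%N -> mxe S i' i' <= mxe S i i)].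

Lemma mxeO m n (M : 'M[C]_(m, n)) (r c : nat) (hr : (r < m)%N) (hc : (c < n)%N) :
  mxe M r c = M (Ordinal hr) (Ordinal hc).
Proof. exact: (mxeE M (Ordinal hr) (Ordinal hc)). Qed.

Lemma mxeE1 m n (M : 'M[C]_(m, n)) (r : nat) (hr : (r < m)%N) (c : 'I_n) :
  mxe M r c = M (Ordinal hr) c.
Proof. exact: (mxeE M (Ordinal hr) c). Qed.

Lemma mxeE2 m n (M : 'M[C]_(m, n)) (r : 'I_m) (c : nat) (hc : (c < n)%N) :
  mxe M r c = M r (Ordinal hc).
Proof. exact: (mxeE M r (Ordinal hc)). Qed.

Lemma mxe_diag m1 m2 (S : 'M[C]_(m1, m2)) r c : isdiag S -> r != c -> mxe S r c = 0.
Proof.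
move=> dS h; case: (ltnP r m1) => h1; last by rewrite mxe_out ?h1.
case: (ltnP c m2) => h2; last by rewrite mxe_out ?h2 ?orbT.
by rewrite (mxeO S h1 h2) dS.
Qed.

Lemma mul_diag p m1 m2 (X : 'M[C]_(p, m1)) (S : 'M[C]_(m1, m2)) : isdiag S ->
  forall (l : 'I_p) (c : 'I_m2), (X *m S) l c = mxe X l c * mxe S c c.
Proof.
move=> hS l c; rewrite mxE; case: (ltnP c m1) => hc.
  rewrite (bigD1 (Ordinal hc)) //= [X in _ + X = _]big1 ?addr0.
    by rewrite (mxeE2 X l hc) (mxeE1 S hc c).
  by move=> k hk; rewrite hS ?mulr0 //; apply: contra hk => /eqP h; apply/eqP/val_inj.
rewrite (mxe_out X (r := l)) ?hc ?orbT // mul0r big1 // => k _.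
by rewrite hS ?mulr0 // neq_ltn (leq_trans (ltn_ord k) hc).
Qed.

Lemma shg_diag m1 m2 (S : 'M[C]_(m1, m2)) : isdiag (shg S).
Proof. by move=> r c h; rewrite mxE (negbTE h). Qed.

Lemma mxe_shg m1 m2 (S : 'M[C]_(m1, m2)) c : mxe (shg S) c c = hh c (mxe S c c).
Proof.
case: (ltnP c m1) => h1; last by rewrite !mxe_out ?h1 ?hh0.
case: (ltnP c m2) => h2; last by rewrite !mxe_out ?h2 ?orbT ?hh0.
by rewrite !(mxeO _ h1 h2) mxE eqxx.
Qed.

Lemma transfer p m1 m1' m2 (X1 : 'M[C]_(p, m1)) (X2 : 'M[C]_(p, m1'))
  (S1 : 'M[C]_(m1, m2)) (S2 : 'M[C]_(m1', m2)) :
  isdiag S1 -> isdiag S2 -> (forall c, mxe S1 c c = mxe S2 c c) ->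
  (forall (l : 'I_p) c, mxe S1 c c != 0 -> mxe X1 l c = mxe X2 l c) ->
  X1 *m S1 = X2 *m S2 /\ X1 *m shg S1 = X2 *m shg S2.
Proof.
move=> d1 d2 hs hx; split; apply/matrixP => l c; rewrite !mul_diag ?shg_diag //.
  case: (eqVneq (mxe S2 c c) 0) => [h|h]; first by rewrite hs h !mulr0.
  by rewrite hs hx // hs.
  rewrite !mxe_shg hs; case: (eqVneq (mxe S2 c c) 0) => [h|h]; first by rewrite h hh0 !mulr0.
  by rewrite hx // hs.
all: exact: shg_diag.
Qed.

Lemma col_eq p m1 m2 (X1 X2 : 'M[C]_(p, m1)) (S : 'M[C]_(m1, m2)) :
  isdiag S -> X1 *m S = X2 *m S ->
  forall (l : 'I_p) c, mxe S c c != 0 -> mxe X1 l c = mxe X2 l c.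
Proof.
move=> d e l c h.
have hc2 : (c < m2)%N.
  by rewrite ltnNge; apply: contra h => hc; rewrite mxe_out // hc orbT.
have := congr1 (fun M : 'M[C]_(p, m2) => M l (Ordinal hc2)) e; rewrite /= !mul_diag //=.
exact: (mulIf h).
Qed.

Lemma mxe_out_min m1 m2 (S : 'M[C]_(m1, m2)) i : (minn m1 m2 <= i)%N -> mxe S i i = 0.
Proof. by move=> h; rewrite mxe_out // -geq_min. Qed.

Lemma slice_fwd n1 k n2 (Q : 'M[C]_(n1, k)) (B : 'M[C]_(k, n2)) U S V :
  mxH Q *m Q = 1%:M -> svdj (Q *m B) U S V ->
  exists U' S', svdj B U' S' V /\
    U *m shg S *m mxH V = Q *m (U' *m shg S' *m mxH V).
Proof.
move=> hQ [[hU1 hU2] [hV1 hV2] dS hA [hpos hsort]].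
have hk : (k <= n1)%N by apply: (@unitary_le _ _ _ (mxH Q)); rewrite mxHK.
set G := mxH Q *m U.
have hUS : U *m S = Q *m B *m V by rewrite hA -mulmxA hV1 mulmx1.
have ha : Q *m G *m S = U *m S.
  rewrite /G -!mulmxA hUS [mxH Q *m _]mulmxA [mxH Q *m _]mulmxA hQ mul1mx.
  by rewrite mulmxA.
have hcol := col_eq dS ha.
set r := find (fun c => mxe S c c == 0) (iota 0 (minn n1 n2)).
have hrm : (r <= minn n1 n2)%N.
  by rewrite /r -[X in (_ <= X)%N](size_iota 0) find_size.
have hlt : forall c, (c < r)%N -> mxe S c c != 0.
  move=> c hc; have := before_find 0%N hc; rewrite nth_iota ?add0n.
    by move=> ->.
  exact: leq_trans hc hrm.
have hge : forall c, mxe S c c != 0 -> (c < r)%N.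
  move=> c hc; rewrite ltnNge; apply/negP => hrc.
  have hcm : (c < minn n1 n2)%N.
    by rewrite ltnNge; apply: contra hc => hmc; rewrite mxe_out_min.
  have hr : (r < minn n1 n2)%N := leq_ltn_trans hrc hcm.
  have hhas : has (fun c => mxe S c c == 0) (iota 0 (minn n1 n2)).
    by rewrite has_find size_iota.
  have := nth_find 0%N hhas; rewrite -/r nth_iota // add0n => /eqP hr0.
  move: hc; suff -> : mxe S c c = 0 by rewrite eqxx.
  apply/le_anti; rewrite hpos // andbT -hr0; exact: hsort.
have hrn1 : (r <= n1)%N by apply: (leq_trans hrm); rewrite geq_minl.
set M := \matrix_(i < r, l < k) (mxe G l i)^*.
have hGG : mxH G *m G = mxH (Q *m G) *m (Q *m G).
  by rewrite mxHM -mulmxA [mxH Q *m _]mulmxA hQ mul1mx.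
have key : forall (i i' : 'I_n1), mxe S i i != 0 -> mxe S i' i' != 0 ->
    (mxH G *m G) i i' = (i == i')%:R.
  move=> i i' h h'; rewrite hGG.
  transitivity ((mxH U *m U) i i'); last by rewrite hU1 mxE.
  rewrite !mxE; apply: eq_bigr => l _; rewrite !mxHE.
  by rewrite -[(Q *m G) l i]mxeE -[(Q *m G) l i']mxeE !hcol // !mxeE.
have hMM : M *m mxH M = 1%:M.
  apply/matrixP => i i'.
  have hi : (i < n1)%N := leq_trans (ltn_ord i) hrn1.
  have hi' : (i' < n1)%N := leq_trans (ltn_ord i') hrn1.
  have := key (Ordinal hi) (Ordinal hi') (hlt _ (ltn_ord i)) (hlt _ (ltn_ord i')).
  rewrite !mxE => <-; apply: eq_bigr => l _.
  by rewrite !mxHE -(mxeE2 G l hi) -(mxeE2 G l hi') /M !mxE conjCK.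
have hrk : (r <= k)%N := unitary_le hMM.
have [E [hE hEe]] := complete_rows hMM.
set U' := mxH E.
have hU'1 : mxH U' *m U' = 1%:M by rewrite /U' mxHK hE.
have hU'2 : U' *m mxH U' = 1%:M by apply: mulmx1C.
have hU'col : forall (l : 'I_k) c, mxe S c c != 0 -> mxe G l c = mxe U' l c.
  move=> l c h; have hc := hge c h; have hck : (c < k)%N := leq_trans hc hrk.
  rewrite (mxeE2 U' l hck) /U' mxHE hEe //= (mxeE1 M hc l) mxE conjCK.
  by [].
set S' := \matrix_(i < k, c < n2) mxe S i c.
have dS' : isdiag S'.
  by move=> i c h; rewrite mxE mxe_diag.
have hSS : forall c, mxe S c c = mxe S' c c.
  move=> c; case: (ltnP c k) => hck; last first.
    rewrite (mxe_out S' (r := c)) ?hck //.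
    apply/eqP; apply: contraT => h; have := hge c h => hcr.
    by move: (leq_trans hcr hrk); rewrite ltnNge hck.
  case: (ltnP c n2) => hcn; last by rewrite !mxe_out ?hcn ?orbT.
  by rewrite (mxeO S' hck hcn) mxE.
have [tr1 tr2] := transfer dS dS' hSS hU'col.
have hUc : forall (l : 'I_n1) c, mxe S c c != 0 -> mxe U l c = mxe (Q *m G) l c.
  by move=> l c h; rewrite hcol.
have [_ tr3] := transfer dS dS (fun c => erefl) hUc.
exists U', S'; split; last first.
  by rewrite tr3 -[Q *m G *m shg S]mulmxA tr2 !mulmxA.
split => //.
- have -> : B = mxH Q *m (Q *m B) by rewrite mulmxA hQ mul1mx.
  by rewrite hA !mulmxA -tr1.
- split.
    move=> i hi; rewrite -hSS; apply: hpos.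
    by apply: (leq_trans hi); rewrite leq_min geq_minr andbT (leq_trans (geq_minl _ _) hk).
  move=> i i' hii' hi'; rewrite -!hSS; apply: hsort => //.
  by apply: (leq_trans hi'); rewrite leq_min geq_minr andbT (leq_trans (geq_minl _ _) hk).
Qed.
Lemma slice_bwd n1 k n2 (Q : 'M[C]_(n1, k)) (B : 'M[C]_(k, n2)) U' S' V :
  mxH Q *m Q = 1%:M -> svdj B U' S' V ->
  exists U S, svdj (Q *m B) U S V /\
    Q *m (U' *m shg S' *m mxH V) = U *m shg S *m mxH V.
Proof.
move=> hQ [[hU1 hU2] [hV1 hV2] dS' hB [hpos hsort]].
have hk : (k <= n1)%N by apply: (@unitary_le _ _ _ (mxH Q)); rewrite mxHK.
set M := mxH (Q *m U').
have hMM : M *m mxH M = 1%:M.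
  by rewrite /M mxHK mxHM -mulmxA [mxH Q *m _]mulmxA hQ mul1mx hU1.
have [E [hE hEe]] := complete_rows hMM.
set U := mxH E.
have hUa : mxH U *m U = 1%:M by rewrite /U mxHK hE.
have hUb : U *m mxH U = 1%:M by apply: mulmx1C.
set S := \matrix_(i < n1, c < n2) mxe S' i c.
have dS : isdiag S by move=> i c h; rewrite mxE mxe_diag.
have hSS : forall c, mxe S' c c = mxe S c c.
  move=> c; case: (ltnP c n1) => hc1; last first.
    by rewrite !mxe_out ?hc1 ?(leq_trans hk hc1).
  case: (ltnP c n2) => hcn; last by rewrite !mxe_out ?hcn ?orbT.
  by rewrite (mxeO S hc1 hcn) mxE.
have hcolU : forall (l : 'I_n1) c, mxe S' c c != 0 -> mxe (Q *m U') l c = mxe U l c.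
  move=> l c h.
  have hck : (c < k)%N by rewrite ltnNge; apply: contra h => hc; rewrite mxe_out ?hc.
  have hc1 : (c < n1)%N := leq_trans hck hk.
  rewrite (mxeE2 U l hc1) /U mxHE hEe //= (mxeE1 M hck l) /M mxHE conjCK.
  by rewrite (mxeE2 _ l hck).
have [tr1 tr2] := transfer dS' dS hSS hcolU.
exists U, S; split; last by rewrite !mulmxA tr2.
split => //.
- by rewrite hB !mulmxA tr1.
- have hmin : forall i, (minn k n2 <= i)%N -> mxe S' i i = 0.
    by move=> i hi; rewrite mxe_out_min.
  have hpos' : forall i, 0 <= mxe S' i i.
    move=> i; case: (ltnP i (minn k n2)) => hi; first exact: hpos.
    by rewrite hmin.
  split; first by move=> i _; rewrite -hSS.
  move=> i i' hii' hi'; rewrite -!hSS.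
  case: (ltnP i' (minn k n2)) => h; first exact: hsort.
  by rewrite hmin.
Qed.
End Slice.
Section Main.
Local Open Scope complex_scope.
Variable R : realType.
Local Notation C := R[i].

Lemma GST0 (w p : R) : GST 0 w p = 0.
Proof. by rewrite /GST; case: ifP => // _; case: ifP => // _; rewrite sgr0 mul0r. Qed.

Variable ns : seq nat.
Hypothesis nspos : all (fun n => 0 < n)%N ns.
Variable Us : forall a : 'I_(size ns), 'M[C]_(nth 1 ns a).
Hypothesis Uunit : forall a, Us a \in unitmx.
Variables (W : nat -> 'I_(dimN ns) -> R) (p tau : R).

Definition hj (j : 'I_(dimN ns)) : nat -> C -> C :=
  fun r x => (GST (complex.Re x) (tau * W r j) p)%:C.

Lemma hj0 j c : hj j c 0 = 0.
Proof. by rewrite /hj /= GST0. Qed.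

Lemma gtsvt_slices m1 m2 (A X : tensor R ns m1 m2) :
  gtsvt Us W p tau A X <->
  exists u s v, forall j, svdj (Lt Us A j) (u j) (s j) (v j) /\
    Lt Us X j = u j *m shg (hj j) (s j) *m mxH (v j).
Proof.
split.
  move=> [U [S [V [[[oU1 oU2] [[oV1 oV2] [fS [fLS [eA [hpos hsort]]]]]] eX]]]].
  exists (Lt Us U), (Lt Us S), (Lt Us V) => j; split; last first.
    by rewrite eX !(Lt_tprod nspos Uunit) (Lt_ttr nspos Uunit) (Lt_Linv nspos Uunit).
  split.
  - split.
      by move: (congr1 (fun T => Lt Us T j) oU1) => /=;
        rewrite (Lt_tprod nspos Uunit) (Lt_ttr nspos Uunit) (Lt_tid nspos Uunit).
    by move: (congr1 (fun T => Lt Us T j) oU2) => /=;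
      rewrite (Lt_tprod nspos Uunit) (Lt_ttr nspos Uunit) (Lt_tid nspos Uunit).
  - split.
      by move: (congr1 (fun T => Lt Us T j) oV1) => /=;
        rewrite (Lt_tprod nspos Uunit) (Lt_ttr nspos Uunit) (Lt_tid nspos Uunit).
    by move: (congr1 (fun T => Lt Us T j) oV2) => /=;
      rewrite (Lt_tprod nspos Uunit) (Lt_ttr nspos Uunit) (Lt_tid nspos Uunit).
  - by move=> r c; apply: fLS.
  - by rewrite {1}eA !(Lt_tprod nspos Uunit) (Lt_ttr nspos Uunit).
  - by split; [apply: hpos | apply: hsort].
move=> [u [s [v h]]].
exists (Linv Us u), (Linv Us s), (Linv Us v); split; last first.
  apply: (tensor_eq nspos Uunit) => j.
  rewrite !(Lt_tprod nspos Uunit) (Lt_ttr nspos Uunit) !(Lt_Linv nspos Uunit).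
  rewrite /Shat (Lt_Linv nspos Uunit); exact: (h j).2.
have LL := Lt_Linv nspos Uunit.
split; [|split; [|split; [|split; [|split; [|split]]]]].
- split; apply: (tensor_eq nspos Uunit) => j;
  rewrite (Lt_tprod nspos Uunit) (Lt_ttr nspos Uunit) (Lt_tid nspos Uunit) LL;
  by have [[? ?] _ _ _ _] := (h j).1.
- split; apply: (tensor_eq nspos Uunit) => j;
  rewrite (Lt_tprod nspos Uunit) (Lt_ttr nspos Uunit) (Lt_tid nspos Uunit) LL;
  by have [_ [? ?] _ _ _] := (h j).1.
- apply: (Linv_fdiag nspos) => j r c hrc.
  by have [_ _ d _ _] := (h j).1; apply: d.
- by move=> j r c hrc; rewrite LL; have [_ _ d _ _] := (h j).1; apply: d.
- apply: (tensor_eq nspos Uunit) => j.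
  rewrite !(Lt_tprod nspos Uunit) (Lt_ttr nspos Uunit) !LL.
  by have [_ _ _ e _] := (h j).1.
- by move=> j i hi; rewrite LL; have [_ _ _ _ [hp _]] := (h j).1; apply: hp.
- by move=> j i i' h1 h2; rewrite LL; have [_ _ _ _ [_ hs]] := (h j).1; apply: hs.
Qed.
End Main.
Local Open Scope ring_scope.
Local Open Scope complex_scope.

(* ns = [:: n_3; ...; n_d], so d = size ns + 2 *)
Theorem proposition1 (R : realType) (ns : seq nat)
  (Us : forall a : 'I_(size ns), 'M[R[i]]_(nth 1 ns a))
  (alpha : 'I_(size ns) -> R)
  (n1 n2 k : nat) (tau p : R) (W : nat -> 'I_(dimN ns) -> R)
  (Q : tensor R ns n1 k) (B : tensor R ns k n2) :
  (1 <= size ns)%N ->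
  all (fun n => 0 < n)%N ns -> (0 < n1)%N -> (0 < n2)%N -> (0 < k)%N ->
  (forall a, 0 < alpha a /\
     Us a *m mxH (Us a) = ((alpha a)%:C)%:M /\
     mxH (Us a) *m Us a = ((alpha a)%:C)%:M) ->
  0 < tau -> 0 < p -> p < 1 ->
  (forall i j, 0 <= W i j) ->
  real_tensor Q -> real_tensor B -> real_tensor (tprod Us Q B) ->
  part_orth Us Q ->
  forall X : tensor R ns n1 n2,
    gtsvt Us W p tau (tprod Us Q B) X <->
    exists Y : tensor R ns k n2, gtsvt Us W p tau B Y /\ X = tprod Us Q Y.
Proof.
move=> hsz nspos hn1 hn2 hk hU htau hp0 hp1 hW hQr hBr hAr hQ X.
have Uunit : forall a, Us a \in unitmx.
  move=> a; have [ha [h1 _]] := hU a.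
  have hne : (alpha a)%:C != 0 :> R[i].
    apply/eqP => /(congr1 (@complex.Re R)) /= h; by move: ha; rewrite h ltxx.
  have : Us a *m (((alpha a)%:C)^-1 *: mxH (Us a)) = 1%:M.
    by rewrite -scalemxAr h1 scale_scalar_mx mulVf.
  by case/mulmx1_unit.
have hQj : forall j, mxH (Lt Us Q j) *m Lt Us Q j = 1%:M.
  move=> j; move: (congr1 (fun T => Lt Us T j) hQ) => /=.
  by rewrite (Lt_tprod nspos Uunit) (Lt_ttr nspos Uunit) (Lt_tid nspos Uunit).
split.
- move=> /(gtsvt_slices nspos Uunit) [u [s [v h]]].
  have : forall j, exists us : 'M[R[i]]_k * 'M[R[i]]_(k, n2),
      svdj (Lt Us B j) us.1 us.2 (v j) /\
      u j *m shg (hj W p tau j) (s j) *m mxH (v j) =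
      Lt Us Q j *m (us.1 *m shg (hj W p tau j) us.2 *m mxH (v j)).
    move=> j; have [h1 h2] := h j; rewrite (Lt_tprod nspos Uunit) in h1.
    have [U' [S' [e1 e2]]] := slice_fwd (hj0 W p tau j) (hQj j) h1.
    by exists (U', S').
  move=> /choice [f hf].
  exists (Linv Us (fun j => (f j).1 *m shg (hj W p tau j) (f j).2 *m mxH (v j))); split.
    apply/(gtsvt_slices nspos Uunit).
    exists (fun j => (f j).1), (fun j => (f j).2), v => j; split; first exact: (hf j).1.
    by rewrite (Lt_Linv nspos Uunit).
  apply: (tensor_eq nspos Uunit) => j.
  by rewrite (Lt_tprod nspos Uunit) (Lt_Linv nspos Uunit) -(hf j).2 (h j).2.
- move=> [Y [/(gtsvt_slices nspos Uunit) [u' [s' [v h]]] ->]].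
  have : forall j, exists us : 'M[R[i]]_n1 * 'M[R[i]]_(n1, n2),
      svdj (Lt Us (tprod Us Q B) j) us.1 us.2 (v j) /\
      Lt Us Q j *m (u' j *m shg (hj W p tau j) (s' j) *m mxH (v j)) =
      us.1 *m shg (hj W p tau j) us.2 *m mxH (v j).
    move=> j; rewrite (Lt_tprod nspos Uunit).
    have [U [S [e1 e2]]] := slice_bwd (hj0 W p tau j) (hQj j) (h j).1.
    by exists (U, S).
  move=> /choice [f hf].
  apply/(gtsvt_slices nspos Uunit).
  exists (fun j => (f j).1), (fun j => (f j).2), v => j; split; first exact: (hf j).1.
  by rewrite (Lt_tprod nspos Uunit) (h j).2 (hf j).2.
Qed.
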